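(* Let $A=\{a_n\}_{n\in\mathbb Z}\subset\mathbb R$ be an almost periodic set with $0\notin A$, enumerated so that $a_n\le a_{n+1}$ for all $n$. Then the finite limit $$\alpha_0=\lim_{N\to\infty}\sum_{|a_n|<N}\frac1{a_n}$$ exists, and for every $z\in\mathbb C\setminus A$ the series $$\alpha_z=\frac1{z-a_0}+\sum_{n=1}^\infty\left[\frac1{z-a_n}+\frac1{z-a_{-n}}\right]$$ converges absolutely.
   Context: A discrete locally finite multiset $A=\{a_n\}_{n\in\mathbb Z}\subset\mathbb R$ (a point may occur several times in the sequence) is called almost periodic if for every $\varepsilon>0$ the set $$E_\varepsilon=\{\tau\in\mathbb R:\ \exists\text{ a bijection }\sigma:\mathbb Z\to\mathbb Z\text{ with }\sup_n|a_n+\tau-a_{\sigma(n)}|<\varepsilon\}$$ is relatively dense, i.e. there is $L_\varepsilon>0$ with $E_\varepsilon\cap(x,x+L_\varepsilon)\ne\emptyset$ for every $x\in\mathbb R$. *)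

(* Defs.v *)
From Stdlib Require Import Reals ZArith.
From Coquelicot Require Import Coquelicot.
Open Scope R_scope.

(* A multiset {a_n}_{n in Z} of reals is given as a sequence a : Z -> R. *)

Definition locally_finite (a : Z -> R) : Prop :=
  forall M : R, exists K : nat,
    forall n : Z, Rabs (a n) <= M -> (Z.abs n <= Z.of_nat K)%Z.

Definition bijective_Z (s : Z -> Z) : Prop :=
  exists g : Z -> Z, (forall n, g (s n) = n) /\ (forall n, s (g n) = n).

Definition eps_almost_period (a : Z -> R) (eps tau : R) : Prop :=
  exists sigma : Z -> Z, bijective_Z sigma /\
    exists M : R, M < eps /\
      forall n : Z, Rabs (a n + tau - a (sigma n)) <= M.

Definition relatively_dense (E : R -> Prop) : Prop :=
  exists L : R, 0 < L /\ forall x : R, exists tau, E tau /\ x < tau < x + L.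

Definition almost_periodic_set (a : Z -> R) : Prop :=
  locally_finite a /\
  forall eps : R, 0 < eps -> relatively_dense (eps_almost_period a eps).

Definition window_sum (a : Z -> R) (N : R) (K : nat) : R :=
  sum_f_R0 (fun i : nat =>
      let n := (Z.of_nat i - Z.of_nat K)%Z in
      if Rlt_dec (Rabs (a n)) N then / a n else 0) (2 * K).

(* s = sum_{|a_n| < N} 1/a_n : the (finite) sum over all indices n with
   |a_n| < N, computed over any window [-K, K] containing all those n. *)
Definition recip_sum_is (a : Z -> R) (N s : R) : Prop :=
  exists K : nat,
    (forall n : Z, Rabs (a n) < N -> (Z.abs n <= Z.of_nat K)%Z) /\
    s = window_sum a N K.

Definition pair_term (a : Z -> R) (z : C) (n : Z) : C :=
  Cplus (Cinv (Cminus z (RtoC (a n)))) (Cinv (Cminus z (RtoC (a (- n)%Z)))).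

(* Main.v *)
Require Import Defs.
From Stdlib Require Import Reals ZArith List Lia Lra Classical.
From Coquelicot Require Import Coquelicot.
Open Scope R_scope.

Lemma Rabs_le_inv (x y : R) : Rabs x <= y -> - y <= x <= y.
Proof. intros H. unfold Rabs in H. destruct (Rcase_abs x); lra. Qed.

Lemma mono_le (a : Z -> R) (hmono : forall n : Z, a n <= a (n + 1)%Z) :
  forall i j, (i <= j)%Z -> a i <= a j.
Proof.
  intros i j Hij.
  replace j with (i + Z.of_nat (Z.to_nat (j - i)))%Z by lia.
  induction (Z.to_nat (j - i)) as [|d IH].
  - replace (i + Z.of_nat 0)%Z with i by lia. lra.
  - replace (i + Z.of_nat (S d))%Z with (i + Z.of_nat d + 1)%Z by lia.
    specialize (hmono (i + Z.of_nat d)%Z). lra.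
Qed.

Lemma PH (g : Z -> Z) (n : nat) (u v : Z) :
  (forall t t', (0 <= t <= Z.of_nat n)%Z -> (0 <= t' <= Z.of_nat n)%Z -> g t = g t' -> t = t') ->
  (forall t, (0 <= t <= Z.of_nat n)%Z -> (u <= g t <= v)%Z) ->
  (Z.of_nat n <= v - u)%Z.
Proof.
  intros Hinj Hrng.
  set (l := map (fun k => g (Z.of_nat k)) (seq 0 (S n))).
  set (l' := map (fun k => (u + Z.of_nat k)%Z) (seq 0 (Z.to_nat (v - u + 1)))).
  assert (HN : NoDup l).
  { apply NoDup_map_NoDup_ForallPairs; [|apply seq_NoDup].
    intros x y Hx Hy E. apply in_seq in Hx. apply in_seq in Hy.
    apply Hinj in E; lia. }
  assert (HI : incl l l').
  { intros y Hy. unfold l in Hy. apply in_map_iff in Hy.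
    destruct Hy as [k [Hk Hk']]. apply in_seq in Hk'.
    assert (B := Hrng (Z.of_nat k)). specialize (B ltac:(lia)).
    unfold l'. apply in_map_iff. exists (Z.to_nat (y - u)). split.
    - lia.
    - apply in_seq. lia. }
  assert (H := NoDup_incl_length HN HI).
  unfold l, l' in H. rewrite !length_map, !length_seq in H. lia.
Qed.

Definition AP1 (a : Z -> R) (L : R) : Prop :=
  forall x, exists tau (sigma g : Z -> Z), x < tau < x + L /\
    (forall n, g (sigma n) = n) /\ (forall n, sigma (g n) = n) /\
    forall n, Rabs (a n + tau - a (sigma n)) <= 1.

Lemma get_AP1 (a : Z -> R) : almost_periodic_set a -> exists L, 0 < L /\ AP1 a L.
Proof.
  intros [_ H]. destruct (H 1 Rlt_0_1) as [L [HL HD]].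
  exists L; split; auto. intros x. destruct (HD x) as [tau [[s [[g [H1 H2]] [M [HM HM']]]] Ht]].
  exists tau, s, g. repeat split; try lra; auto.
  intros n. specialize (HM' n). lra.
Qed.

Lemma gap (a : Z -> R) (hmono : forall n : Z, a n <= a (n + 1)%Z) L :
  AP1 a L -> forall j, a (j + 1)%Z - a j <= L + 2.
Proof.
  intros HA j. apply Rnot_lt_le; intros Hc.
  destruct (HA (a j + 1 - a 0%Z)) as [tau [s [g [Ht [_ [_ Hs]]]]]].
  specialize (Hs 0%Z). apply Rabs_le_inv in Hs.
  destruct (Z_le_gt_dec (s 0%Z) j) as [Hle|Hgt].
  - assert (X := mono_le a hmono _ _ Hle). lra.
  - assert (X := mono_le a hmono (j+1)%Z (s 0%Z) ltac:(lia)). lra.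
Qed.

Lemma BD (a : Z -> R) (hmono : forall n : Z, a n <= a (n + 1)%Z) L :
  locally_finite a -> AP1 a L -> forall R0, exists C : nat,
  forall i j, (i <= j)%Z -> a j - a i <= R0 -> (j - i <= Z.of_nat C)%Z.
Proof.
  intros HLF HA R0. destruct (HLF (L + Rabs R0 + 1)) as [K HK].
  exists (2 * K)%nat. intros i j Hij Hd.
  destruct (HA (- a i - L)) as [tau [s [g [Ht [Hg1 [Hg2 Hs]]]]]].
  assert (P := PH (fun t => s (i + t)%Z) (Z.to_nat (j - i)) (- Z.of_nat K) (Z.of_nat K)).
  cut (Z.of_nat (Z.to_nat (j - i)) <= Z.of_nat K - - Z.of_nat K)%Z; [lia|].
  apply P.
  - intros t t' _ _ E. apply (f_equal g) in E. rewrite !Hg1 in E. lia.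
  - intros t Ht'. cut (Rabs (a (s (i + t)%Z)) <= L + Rabs R0 + 1).
    { intros X. apply HK in X. lia. }
    specialize (Hs (i + t)%Z). apply Rabs_le_inv in Hs.
    assert (X1 := mono_le a hmono i (i + t)%Z ltac:(lia)).
    assert (X2 := mono_le a hmono (i + t)%Z j ltac:(lia)).
    assert (R0 <= Rabs R0) by apply Rle_abs.
    apply Rabs_le. lra.
Qed.

Lemma gapn (a : Z -> R) (G : R) (hg : forall j, a (j + 1)%Z - a j <= G) :
  forall i (d : nat), a (i + Z.of_nat d)%Z - a i <= G * INR d.
Proof.
  intros i d. induction d as [|d IH].
  - replace (i + Z.of_nat 0)%Z with i by lia. simpl. lra.
  - replace (i + Z.of_nat (S d))%Z with (i + Z.of_nat d + 1)%Z by lia.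
    specialize (hg (i + Z.of_nat d)%Z). rewrite S_INR. lra.
Qed.

Lemma absgap (a : Z -> R) (hmono : forall n : Z, a n <= a (n + 1)%Z) (G : R)
  (hg : forall j, a (j + 1)%Z - a j <= G) :
  forall i j, Rabs (a j - a i) <= G * IZR (Z.abs (j - i)).
Proof.
  intros i j. destruct (Z_le_gt_dec i j) as [H|H].
  - assert (X := gapn a G hg i (Z.to_nat (j - i))).
    replace (i + Z.of_nat (Z.to_nat (j - i)))%Z with j in X by lia.
    rewrite INR_IZR_INZ in X. replace (Z.of_nat (Z.to_nat (j - i))) with (Z.abs (j - i)) in X by lia.
    assert (Y := mono_le a hmono i j H).
    rewrite Rabs_right by lra. lra.
  - assert (X := gapn a G hg j (Z.to_nat (i - j))).
    replace (j + Z.of_nat (Z.to_nat (i - j)))%Z with i in X by lia.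
    rewrite INR_IZR_INZ in X. replace (Z.of_nat (Z.to_nat (i - j))) with (Z.abs (j - i)) in X by lia.
    assert (Y := mono_le a hmono j i ltac:(lia)).
    rewrite Rabs_left1 by lra. lra.
Qed.

Lemma spread (a : Z -> R) (hmono : forall n : Z, a n <= a (n + 1)%Z) (C2 : nat)
  (HC2 : forall i j, (i <= j)%Z -> a j - a i <= 2 -> (j - i <= Z.of_nat C2)%Z)
  (rho g : Z -> Z) (t : R) (Hg : forall n, g (rho n) = n)
  (Hr : forall j, Rabs (a j + t - a (rho j)) <= 1) :
  forall i n, (0 <= n)%Z -> (n - 2 * Z.of_nat C2 <= rho (i + n) - rho i)%Z.
Proof.
  intros i n Hn.
  assert (P := PH (fun s => rho (i + s)%Z) (Z.to_nat n) (rho i - Z.of_nat C2)%Z (rho (i + n) + Z.of_nat C2)%Z).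
  cut (Z.of_nat (Z.to_nat n) <= rho (i + n) + Z.of_nat C2 - (rho i - Z.of_nat C2))%Z; [lia|].
  apply P.
  - intros s s' _ _ E. apply (f_equal g) in E. rewrite !Hg in E. lia.
  - intros s Hs. simpl. split.
    + destruct (Z_le_gt_dec (rho i) (rho (i + s)%Z)) as [E|E]; [lia|].
      assert (X := mono_le a hmono (rho (i + s)%Z) (rho i) ltac:(lia)).
      assert (Y := mono_le a hmono i (i + s)%Z ltac:(lia)).
      assert (H1 := Rabs_le_inv _ _ (Hr i)). assert (H2 := Rabs_le_inv _ _ (Hr (i + s)%Z)).
      assert (Z := HC2 (rho (i + s)%Z) (rho i) ltac:(lia) ltac:(lra)). lia.
    + destruct (Z_le_gt_dec (rho (i + s)%Z) (rho (i + n)%Z)) as [E|E]; [lia|].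
      assert (X := mono_le a hmono (rho (i + n)%Z) (rho (i + s)%Z) ltac:(lia)).
      assert (Y := mono_le a hmono (i + s)%Z (i + n)%Z ltac:(lia)).
      assert (H1 := Rabs_le_inv _ _ (Hr (i + n)%Z)). assert (H2 := Rabs_le_inv _ _ (Hr (i + s)%Z)).
      assert (Z := HC2 (rho (i + n)%Z) (rho (i + s)%Z) ltac:(lia) ltac:(lra)). lia.
Qed.

Lemma zshift (a : Z -> R) (hmono : forall n : Z, a n <= a (n + 1)%Z) (C2 : nat)
  (HC2 : forall i j, (i <= j)%Z -> a j - a i <= 2 -> (j - i <= Z.of_nat C2)%Z)
  (s g : Z -> Z) (t : R) (Hg1 : forall n, g (s n) = n) (Hg2 : forall n, s (g n) = n)
  (Hr : forall j, Rabs (a j + t - a (s j)) <= 1) :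
  forall i j, (Z.abs (s j - s i - (j - i)) <= 2 * Z.of_nat C2)%Z.
Proof.
  assert (Hr' : forall m, Rabs (a m + - t - a (g m)) <= 1).
  { intros m. specialize (Hr (g m)). rewrite Hg2 in Hr.
    rewrite <- Rabs_Ropp. replace (- (a m + - t - a (g m))) with (a (g m) + t - a m) by ring. auto. }
  assert (S1 := spread a hmono C2 HC2 s g t Hg1 Hr).
  assert (S2 := spread a hmono C2 HC2 g s (- t) Hg2 Hr').
  assert (K : forall i j, (i <= j)%Z -> (Z.abs (s j - s i - (j - i)) <= 2 * Z.of_nat C2)%Z).
  { intros i j Hij.
    assert (A1 := S1 i (j - i)%Z ltac:(lia)). replace (i + (j - i))%Z with j in A1 by lia.
    destruct (Z_le_gt_dec (s j - s i) (j - i + 2 * Z.of_nat C2)) as [E|E]; [lia|].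
    assert (A2 := S2 (s i) (s j - s i)%Z ltac:(lia)). replace (s i + (s j - s i))%Z with (s j) in A2 by lia.
    rewrite !Hg1 in A2. lia. }
  intros i j. destruct (Z_le_gt_dec i j) as [H|H]; [auto|].
  assert (X := K j i ltac:(lia)). lia.
Qed.

Lemma BDs (a : Z -> R) (hmono : forall n : Z, a n <= a (n + 1)%Z) L :
  locally_finite a -> AP1 a L -> forall R0, exists C : nat,
  forall i j, Rabs (a j - a i) <= R0 -> (Z.abs (j - i) <= Z.of_nat C)%Z.
Proof.
  intros HLF HA R0. destruct (BD a hmono L HLF HA R0) as [C HC]. exists C.
  intros i j H. apply Rabs_le_inv in H. destruct (Z_le_gt_dec i j) as [E|E].
  - assert (X := HC i j E ltac:(lra)). lia.
  - assert (X := HC j i ltac:(lia) ltac:(lra)). lia.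
Qed.

Lemma sym (a : Z -> R) (hmono : forall n : Z, a n <= a (n + 1)%Z) L (HL : 0 < L)
  (HA : AP1 a L) (C1 C2 : nat)
  (HC1 : forall i j, Rabs (a j - a i) <= L + 1 -> (Z.abs (j - i) <= Z.of_nat C1)%Z)
  (HC2 : forall i j, (i <= j)%Z -> a j - a i <= 2 -> (j - i <= Z.of_nat C2)%Z) :
  forall n, Rabs (a n + a (- n)%Z - 2 * a 0%Z) <= (L + 2) * IZR (Z.of_nat C1 + 2 * Z.of_nat C2) + 1 + L.
Proof.
  intros n.
  assert (hg := gap a hmono L HA).
  destruct (HA (a n - a 0%Z - L)) as [tau [s [g [Ht [Hg1 [Hg2 Hs]]]]]].
  assert (H0 := Rabs_le_inv _ _ (Hs 0%Z)).
  assert (E1 : (Z.abs (s 0%Z - n) <= Z.of_nat C1)%Z).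
  { apply HC1. apply Rabs_le. lra. }
  assert (E2 := zshift a hmono C2 HC2 s g tau Hg1 Hg2 Hs 0%Z (- n)%Z).
  assert (E3 : (Z.abs (s (- n)%Z - 0) <= Z.of_nat C1 + 2 * Z.of_nat C2)%Z) by lia.
  assert (E4 := absgap a hmono (L + 2) hg 0%Z (s (- n)%Z)).
  apply IZR_le in E3.
  assert (E5 : (L + 2) * IZR (Z.abs (s (- n)%Z - 0)) <= (L + 2) * IZR (Z.of_nat C1 + 2 * Z.of_nat C2)).
  { apply Rmult_le_compat_l; lra. }
  apply Rabs_le_inv in E4.
  assert (H1 := Rabs_le_inv _ _ (Hs (- n)%Z)).
  apply Rabs_le. lra.
Qed.

Lemma growth (a : Z -> R) (hmono : forall n : Z, a n <= a (n + 1)%Z) (C : nat)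
  (HC : forall i j, (i <= j)%Z -> a j - a i <= 1 -> (j - i <= Z.of_nat C)%Z) :
  forall (n : nat) i, a (i + Z.of_nat n)%Z - a i >= INR n / INR (S C) - 1.
Proof.
  intros n. induction n as [n IH] using (well_founded_induction lt_wf). intros i.
  assert (HSC : 0 < INR (S C)) by (apply lt_0_INR; lia).
  destruct (le_lt_dec n C) as [E|E].
  - assert (X := mono_le a hmono i (i + Z.of_nat n)%Z ltac:(lia)).
    assert (INR n / INR (S C) <= 1).
    { apply Rle_trans with (INR (S C) / INR (S C)).
      - unfold Rdiv. apply Rmult_le_compat_r. left; apply Rinv_0_lt_compat; auto. apply le_INR; lia.
      - right. field. lra. }
    lra.
  - assert (Y := IH (n - S C)%nat ltac:(lia) i).
    assert (Z := HC (i + Z.of_nat (n - S C))%Z (i + Z.of_nat n)%Z ltac:(lia)).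
    assert (W : a (i + Z.of_nat n)%Z - a (i + Z.of_nat (n - S C))%Z > 1).
    { apply Rnot_le_lt. intros Q. specialize (Z Q). lia. }
    rewrite minus_INR in Y by lia.
    replace ((INR n - INR (S C)) / INR (S C)) with (INR n / INR (S C) - 1) in Y by (field; lra).
    lra.
Qed.

Lemma inv_sq_partial : forall N, sum_f_R0 (fun k => / (INR (S k))^2) N <= 2 - / INR (S N).
Proof.
  induction N as [|N IH].
  - simpl. lra.
  - rewrite tech5. 
    assert (H1 : 0 < INR (S N)) by (apply lt_0_INR; lia).
    assert (H2 : INR (S (S N)) = INR (S N) + 1) by (rewrite S_INR; auto).
    rewrite H2 in *.
    cut (/ (INR (S N) + 1) ^ 2 <= / INR (S N) - / (INR (S N) + 1)); [lra|].
    replace (/ INR (S N) - / (INR (S N) + 1)) with (/ (INR (S N) * (INR (S N) + 1))) by (field; lra).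
    set (x := INR (S N)) in *. apply Rinv_le_contravar.
    + apply Rmult_lt_0_compat; lra.
    + simpl. nra.
Qed.

Lemma ex_inv_sq : ex_series (fun k => / (INR (S k))^2).
Proof.
  apply ex_series_Reals_1. apply growing_cv.
  - intros n. rewrite tech5. assert (0 < / (INR (S (S n)))^2).
    { apply Rinv_0_lt_compat. apply pow_lt. apply lt_0_INR; lia. } lra.
  - exists 2. intros x [i ->]. assert (X := inv_sq_partial i).
    assert (0 < / INR (S i)) by (apply Rinv_0_lt_compat, lt_0_INR; lia). lra.
Qed.

Lemma ex_series_eventually (f : nat -> R) (K0 : R) (n0 : nat) :
  (forall k, (n0 <= k)%nat -> Rabs (f k) <= K0 * / (INR (S k))^2) -> ex_series f.
Proof.
  intros H. apply (ex_series_incr_n f n0).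
  apply (ex_series_le (fun k => f (n0 + k)%nat) (fun k => K0 * / (INR (S (n0 + k)))^2)).
  - intros k. apply H. lia.
  - apply (ex_series_incr_n (fun k => K0 * / (INR (S k))^2) n0).
    apply (ex_series_scal_l K0 (fun k => / (INR (S k))^2)). apply ex_inv_sq.
Qed.

Lemma Cmod_inv_sum (w1 w2 : C) (m Q : R) :
  0 < m -> m <= Cmod w1 -> m <= Cmod w2 -> Cmod (w1 + w2) <= Q ->
  Cmod (/ w1 + / w2) <= Q / (m * m).
Proof.
  intros Hm H1 H2 HQ.
  assert (w1 <> 0%C). { intros E. rewrite E, Cmod_0 in H1. lra. }
  assert (w2 <> 0%C). { intros E. rewrite E, Cmod_0 in H2. lra. }
  replace (/ w1 + / w2)%C with ((w1 + w2) * / (w1 * w2))%C by (field; auto).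
  rewrite Cmod_mult, Cmod_inv, Cmod_mult.
  2: { intros E. apply (f_equal Cmod) in E. rewrite Cmod_mult, Cmod_0 in E.
       apply Rmult_integral in E. destruct E; lra. }
  unfold Rdiv. assert (0 <= Cmod (w1 + w2)) by apply Cmod_ge_0.
  apply Rmult_le_compat; auto.
  - left. apply Rinv_0_lt_compat. nra.
  - apply Rinv_le_contravar. nra. apply Rmult_le_compat; lra.
Qed.

Lemma part2 (a : Z -> R) (c B : R) (Hc : 0 < c)
  (Hgr : forall (n : nat) i, a (i + Z.of_nat n)%Z - a i >= INR n * c - 1)
  (Hsym : forall n, Rabs (a n + a (- n)%Z - 2 * a 0%Z) <= B) (z : C) :
  ex_series (fun k : nat => Cmod (pair_term a z (Z.of_nat (S k)))).
Proof.
  set (P := 1 + Rabs (a 0%Z) + Cmod z).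
  set (Q := 2 * Cmod z + B + 2 * Rabs (a 0%Z)).
  destruct (INR_unbounded (2 * P / c)) as [n0 Hn0].
  apply (ex_series_eventually _ (4 * Q / (c * c)) n0).
  intros k Hk. rewrite Rabs_pos_eq by apply Cmod_ge_0.
  set (x := INR (S k)).
  assert (Hxp : 0 < x) by (apply lt_0_INR; lia).
  assert (Hx : 2 * P / c <= x).
  { unfold x. assert (INR n0 <= INR (S k)) by (apply le_INR; lia). lra. }
  assert (Hcx : P <= c * x / 2).
  { apply Rmult_le_compat_l with (r := c / 2) in Hx; [|lra].
    replace (c / 2 * (2 * P / c)) with P in Hx by (field; lra). lra. }
  assert (HP : 0 < P). { unfold P. assert (0 <= Rabs (a 0%Z)) by apply Rabs_pos.
    assert (0 <= Cmod z) by apply Cmod_ge_0. lra. }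
  set (n := Z.of_nat (S k)).
  assert (G1 := Hgr (S k) 0%Z). rewrite Z.add_0_l in G1. fold n x in G1.
  assert (G2 := Hgr (S k) (- n)%Z). replace (- n + Z.of_nat (S k))%Z with 0%Z in G2 by lia. fold x in G2.
  assert (Rz := re_le_Cmod z). apply Rabs_le_inv in Rz.
  assert (A0 := Rle_abs (a 0%Z)). assert (A0' := Rle_abs (- a 0%Z)). rewrite Rabs_Ropp in A0'.
  assert (ReE : forall r, Re (z - RtoC r) = Re z - r) by (intros; unfold Re; simpl; ring).
  unfold pair_term.
  replace (4 * Q / (c * c) * / x ^ 2) with (Q / ((c * x / 2) * (c * x / 2))) by (field; split; lra).
  apply Cmod_inv_sum.
  - lra.
  - eapply Rle_trans; [|apply re_le_Cmod]. rewrite ReE.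
    rewrite Rabs_minus_sym. eapply Rle_trans; [|apply Rle_abs]. unfold P in Hcx. lra.
  - eapply Rle_trans; [|apply re_le_Cmod]. rewrite ReE.
    eapply Rle_trans; [|apply Rle_abs]. unfold P in Hcx. lra.
  - replace ((z - RtoC (a n)) + (z - RtoC (a (- n)%Z)))%C with ((z + z) + - RtoC (a n + a (- n)%Z))%C
      by (rewrite RtoC_plus; ring).
    eapply Rle_trans; [apply Cmod_triangle|]. rewrite Cmod_opp, Cmod_R.
    assert (T := Cmod_triangle z z).
    specialize (Hsym n). apply Rabs_le_inv in Hsym.
    assert (Rabs (a n + a (- n)%Z) <= B + 2 * Rabs (a 0%Z)).
    { apply Rabs_le. lra. }
    unfold Q. lra.
Qed.

Fixpoint fs (g : nat -> R) (K : nat) : R :=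
  match K with O => 0 | S K' => fs g K' + g K' end.

Lemma fs_sum g n : fs g (S n) = sum_f_R0 g n.
Proof. induction n as [|n IH]. simpl; ring. rewrite tech5, <- IH. simpl. ring. Qed.

Lemma sym_window (F : Z -> R) (K : nat) :
  sum_f_R0 (fun i => F (Z.of_nat i - Z.of_nat K)%Z) (2 * K) =
  F 0%Z + fs (fun j => F (Z.of_nat (S j)) + F (- Z.of_nat (S j))%Z) K.
Proof.
  induction K as [|K IH].
  - simpl. ring.
  - replace (2 * S K)%nat with (S (S (2 * K))) by lia.
    rewrite decomp_sum by lia. simpl pred. rewrite tech5.
    rewrite (sum_eq _ (fun i => F (Z.of_nat i - Z.of_nat K)%Z)).
    2: { intros i _. f_equal. lia. }
    change (K + (K + 0))%nat with (2 * K)%nat. rewrite IH. cbn [fs].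
    replace (Z.of_nat 0 - Z.of_nat (S K))%Z with (- Z.of_nat (S K))%Z by lia.
    replace (Z.of_nat (S (S (2 * K))) - Z.of_nat (S K))%Z with (Z.of_nat (S K)) by lia.
    ring.
Qed.

Lemma fs_le (g h : nat -> R) K : (forall j, g j <= h j) -> fs g K <= fs h K.
Proof. intros H. induction K; simpl. lra. specialize (H K). lra. Qed.

Lemma fs_abs (g : nat -> R) K : Rabs (fs g K) <= fs (fun j => Rabs (g j)) K.
Proof.
  induction K; simpl. rewrite Rabs_R0; lra.
  eapply Rle_trans; [apply Rabs_triang|]. lra.
Qed.

Lemma fs_minus (g h : nat -> R) K : fs g K - fs h K = fs (fun j => g j - h j) K.
Proof. induction K; simpl. ring. rewrite <- IHK. ring. Qed.

Lemma fs_plus (g h : nat -> R) K : fs g K + fs h K = fs (fun j => g j + h j) K.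
Proof. induction K; simpl. ring. rewrite <- IHK. ring. Qed.

Lemma fs_mono (g : nat -> R) J K : (forall j, 0 <= g j) -> (J <= K)%nat -> fs g J <= fs g K.
Proof.
  intros H HJ. induction HJ. lra. simpl. specialize (H m). lra.
Qed.

Lemma fs_zero (g : nat -> R) K : (forall j, g j = 0) -> fs g K = 0.
Proof. intros H. induction K; simpl. auto. rewrite IHK, H. ring. Qed.

Lemma fs_tail (e U : nat -> R) J :
  (forall j, (j < J)%nat -> e j = 0) -> (forall j, e j <= U j) ->
  forall K, fs e K <= fs U K - fs U (Nat.min K J).
Proof.
  intros H0 H1 K. induction K as [|K IH].
  - simpl. lra.
  - cbn [fs]. destruct (le_lt_dec J K) as [E|E].
    + replace (Nat.min (S K) J) with J by lia. replace (Nat.min K J) with J in IH by lia.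
      specialize (H1 K). lra.
    + replace (Nat.min (S K) J) with (S K) by lia. replace (Nat.min K J) with K in IH by lia.
      rewrite (H0 K E). simpl fs. lra.
Qed.

Lemma fs_interval (h : nat -> R) (c : R) (lo w : nat) :
  (forall j, (j < lo \/ lo + w < j)%nat -> h j = 0) -> (forall j, 0 <= h j <= c) ->
  forall K, fs h K <= c * INR (Nat.min K (lo + S w) - lo).
Proof.
  intros H0 H1 K. induction K as [|K IH].
  - simpl. lra.
  - simpl fs. destruct (lt_dec K lo) as [E|E].
    + rewrite (H0 K (or_introl E)). replace (Nat.min (S K) (lo + S w) - lo)%nat with (Nat.min K (lo + S w) - lo)%nat by lia. lra.
    + destruct (lt_dec (lo + w) K) as [E'|E'].
      * rewrite (H0 K (or_intror E')). replace (Nat.min (S K) (lo + S w) - lo)%nat with (Nat.min K (lo + S w) - lo)%nat by lia. lra.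
      * replace (Nat.min (S K) (lo + S w) - lo)%nat with (S (Nat.min K (lo + S w) - lo)) by lia.
        rewrite S_INR. specialize (H1 K). lra.
Qed.

Lemma fs_count (h : nat -> R) (c : R) (C3 : nat) :
  (forall j, 0 <= h j <= c) ->
  (forall j k, h j <> 0 -> h k <> 0 -> (j <= k + C3)%nat) ->
  forall K, fs h K <= c * INR (S (2 * C3)).
Proof.
  intros H1 H2 K.
  assert (Hc : 0 <= c) by (destruct (H1 0%nat); lra).
  assert (0 <= INR (S (2 * C3))) by apply pos_INR.
  destruct (classic (exists e, h e <> 0)) as [[e He]|N].
  - eapply Rle_trans; [apply (fs_interval h c (e - C3) (2 * C3))|].
    + intros j Hj. apply NNPP. intros Hj'.
      assert (A1 := H2 j e Hj' He). assert (A2 := H2 e j He Hj'). lia.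
    + auto.
    + apply Rmult_le_compat_l; auto. apply le_INR. lia.
  - rewrite fs_zero. nra. intros j. apply NNPP. intros Hj. apply N. eauto.
Qed.

Section Tail.
Lemma tail1 (u : nat -> R) (exU : ex_series (fun j => Rabs (u j))) K :
  Rabs (Series u - fs u K) <= Series (fun j => Rabs (u j)) - fs (fun j => Rabs (u j)) K.
Proof.
  assert (exu : ex_series u) by (apply ex_series_Rabs; auto).
  destruct K as [|m].
  - simpl. rewrite !Rminus_0_r. apply Series_Rabs. auto.
  - rewrite (Series_incr_n u (S m)) by (auto; lia).
    rewrite (Series_incr_n (fun j => Rabs (u j)) (S m)) by (auto; lia).
    simpl pred. rewrite !fs_sum.
    replace (sum_f_R0 u m + Series (fun k : nat => u (S m + k)%nat) - sum_f_R0 u m)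
      with (Series (fun k : nat => u (S m + k)%nat)) by ring.
    replace (sum_f_R0 (fun j : nat => Rabs (u j)) m + Series (fun k : nat => Rabs (u (S m + k)%nat)) -
       sum_f_R0 (fun j : nat => Rabs (u j)) m) with (Series (fun k : nat => Rabs (u (S m + k)%nat))) by ring.
    apply Series_Rabs. apply (ex_series_incr_n (fun j => Rabs (u j)) (S m)). auto.
Qed.

Lemma tail3 (U : nat -> R) (exU : ex_series U) :
  forall d, 0 < d -> exists J, Series U - fs U J < d.
Proof.
  intros d Hd. assert (H := Series_correct U exU). apply is_series_Reals in H.
  destruct (H d Hd) as [N HN]. exists (S N). rewrite fs_sum.
  specialize (HN N (le_n N)). unfold Rdist in HN. rewrite Rabs_minus_sym in HN.
  apply Rabs_def2 in HN. lra.
Qed.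
End Tail.

Lemma hband (a : Z -> R) (hmono : forall n : Z, a n <= a (n + 1)%Z) (B N : R)
  (Hsym : forall n, Rabs (a n + a (- n)%Z - 2 * a 0%Z) <= B) (n : Z) :
  (0 <= n)%Z -> Rabs (a 0%Z) < N ->
  ((Rabs (a n) < N /\ ~ Rabs (a (- n)%Z) < N) \/ (~ Rabs (a n) < N /\ Rabs (a (- n)%Z) < N)) ->
  N - (B + 2 * Rabs (a 0%Z)) <= a n <= N + (B + 2 * Rabs (a 0%Z)).
Proof.
  intros Hn H0 H.
  assert (M1 := mono_le a hmono 0%Z n Hn).
  assert (M2 := mono_le a hmono (- n)%Z 0%Z ltac:(lia)).
  assert (S := Rabs_le_inv _ _ (Hsym n)).
  assert (A1 := Rle_abs (a 0%Z)). assert (A2 := Rle_abs (- a 0%Z)). rewrite Rabs_Ropp in A2.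
  destruct H as [[H1 H2]|[H1 H2]]; apply Rnot_lt_le in H2 || apply Rnot_lt_le in H1.
  - assert (a (- n)%Z <= - N).
    { unfold Rabs in H2. destruct (Rcase_abs (a (- n)%Z)); lra. }
    assert (a n < N) by (apply Rabs_def2 in H1; lra). lra.
  - assert (N <= a n).
    { unfold Rabs in H1. destruct (Rcase_abs (a n)); lra. }
    assert (- N < a (- n)%Z) by (apply Rabs_def2 in H2; lra). lra.
Qed.

Lemma part1 (a : Z -> R) (hmono : forall n : Z, a n <= a (n + 1)%Z) (G : R) (HG : 0 <= G)
  (Hgap : forall i j, Rabs (a j - a i) <= G * IZR (Z.abs (j - i))) (B : R)
  (Hsym : forall n, Rabs (a n + a (- n)%Z - 2 * a 0%Z) <= B) (C3 : nat)
  (HC3 : forall i j, Rabs (a j - a i) <= 2 * (B + 2 * Rabs (a 0%Z)) -> (Z.abs (j - i) <= Z.of_nat C3)%Z)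
  (exU : ex_series (fun j => Rabs (/ a (Z.of_nat (S j)) + / a (- Z.of_nat (S j))%Z))) :
  exists alpha0 : R,
     forall eps : R, 0 < eps ->
       exists N0 : R, forall N s : R, N0 <= N -> recip_sum_is a N s ->
         Rabs (s - alpha0) < eps.
Proof.
  set (u := fun j : nat => / a (Z.of_nat (S j)) + / a (- Z.of_nat (S j))%Z).
  set (U := fun j => Rabs (u j)).
  exists (/ a 0%Z + Series u).
  intros eps Heps.
  destruct (tail3 U exU (eps / 3) ltac:(lra)) as [J0 HJ0].
  set (Bp := B + 2 * Rabs (a 0%Z)).
  exists (Rmax (Rabs (a 0%Z) + G * INR J0 + 1) (3 * INR (S (2 * C3)) / eps + 1)).
  intros N s HN [K [Hcov Hs]].
  assert (HN1 := Rle_trans _ _ _ (Rmax_l _ _) HN).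
  assert (HN2 := Rle_trans _ _ _ (Rmax_r _ _) HN).
  assert (HGJ : 0 <= G * INR J0) by (apply Rmult_le_pos; auto; apply pos_INR).
  assert (HA0 : 0 <= Rabs (a 0%Z)) by apply Rabs_pos.
  assert (Npos : 0 < N) by lra.
  assert (Hsmall : forall m : Z, (Z.abs m <= Z.of_nat J0)%Z -> Rabs (a m) < N).
  { intros m Hm. assert (X := Hgap 0%Z m). rewrite Z.sub_0_r in X.
    apply IZR_le in Hm. rewrite <- INR_IZR_INZ in Hm.
    assert (G * IZR (Z.abs m) <= G * INR J0) by (apply Rmult_le_compat_l; auto).
    assert (Y := Rabs_triang (a m - a 0%Z) (a 0%Z)). replace (a m - a 0%Z + a 0%Z) with (a m) in Y by ring.
    lra. }
  assert (HK : (J0 <= K)%nat).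
  { assert (X := Hcov (Z.of_nat J0) (Hsmall (Z.of_nat J0) ltac:(lia))). lia. }
  set (F := fun n : Z => if Rlt_dec (Rabs (a n)) N then / a n else 0).
  set (v := fun j : nat => F (Z.of_nat (S j)) + F (- Z.of_nat (S j))%Z).
  assert (W : window_sum a N K = F 0%Z + fs v K).
  { unfold window_sum. apply (sym_window F K). }
  assert (F0 : F 0%Z = / a 0%Z).
  { unfold F. destruct (Rlt_dec (Rabs (a 0%Z)) N); auto. lra. }
  set (e := fun j : nat => let n := Z.of_nat (S j) in
     if Rlt_dec (Rabs (a n)) N then 0 else if Rlt_dec (Rabs (a (- n)%Z)) N then 0 else U j).
  set (h := fun j : nat => let n := Z.of_nat (S j) in
     if Rlt_dec (Rabs (a n)) N then (if Rlt_dec (Rabs (a (- n)%Z)) N then 0 else / N)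
     else (if Rlt_dec (Rabs (a (- n)%Z)) N then / N else 0)).
  assert (HNi : 0 < / N) by (apply Rinv_0_lt_compat; auto).
  assert (Hinvbig : forall x, ~ Rabs x < N -> Rabs (/ x) <= / N).
  { intros x Hx. apply Rnot_lt_le in Hx. rewrite Rabs_inv. apply Rinv_le_contravar; auto. }
  assert (Hper : forall j, Rabs (v j - u j) <= e j + h j).
  { intros j. unfold v, u, e, h, F, U, u. cbv zeta.
    destruct (Rlt_dec (Rabs (a (Z.of_nat (S j)))) N) as [E1|E1];
    destruct (Rlt_dec (Rabs (a (- Z.of_nat (S j))%Z)) N) as [E2|E2]; cbv iota beta.
    - replace (/ a (Z.of_nat (S j)) + / a (- Z.of_nat (S j))%Z - (/ a (Z.of_nat (S j)) + / a (- Z.of_nat (S j))%Z)) with 0 by ring.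
      rewrite Rabs_R0. lra.
    - replace (/ a (Z.of_nat (S j)) + 0 - (/ a (Z.of_nat (S j)) + / a (- Z.of_nat (S j))%Z)) with (- / a (- Z.of_nat (S j))%Z) by ring.
      rewrite Rabs_Ropp. assert (X := Hinvbig _ E2). lra.
    - replace (0 + / a (- Z.of_nat (S j))%Z - (/ a (Z.of_nat (S j)) + / a (- Z.of_nat (S j))%Z)) with (- / a (Z.of_nat (S j))) by ring.
      rewrite Rabs_Ropp. assert (X := Hinvbig _ E1). lra.
    - replace (0 + 0 - (/ a (Z.of_nat (S j)) + / a (- Z.of_nat (S j))%Z)) with (- (/ a (Z.of_nat (S j)) + / a (- Z.of_nat (S j))%Z)) by ring.
      rewrite Rabs_Ropp. lra. }
  assert (He0 : forall j, (j < J0)%nat -> e j = 0).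
  { intros j Hj. unfold e. cbv zeta.
    destruct (Rlt_dec (Rabs (a (Z.of_nat (S j)))) N) as [E1|E1]; auto.
    exfalso. apply E1. apply Hsmall. lia. }
  assert (HeU : forall j, e j <= U j).
  { intros j. assert (0 <= U j) by apply Rabs_pos. unfold e. cbv zeta.
    destruct (Rlt_dec (Rabs (a (Z.of_nat (S j)))) N); [lra|].
    destruct (Rlt_dec (Rabs (a (- Z.of_nat (S j))%Z)) N); lra. }
  assert (Hh1 : forall j, 0 <= h j <= / N).
  { intros j. unfold h. cbv zeta.
    destruct (Rlt_dec (Rabs (a (Z.of_nat (S j)))) N);
    destruct (Rlt_dec (Rabs (a (- Z.of_nat (S j))%Z)) N); lra. }
  assert (Hhb : forall j, h j <> 0 -> N - Bp <= a (Z.of_nat (S j)) <= N + Bp).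
  { intros j Hj. unfold h in Hj. cbv zeta in Hj. apply hband with (B := B); auto; try lia; try lra.
    destruct (Rlt_dec (Rabs (a (Z.of_nat (S j)))) N);
    destruct (Rlt_dec (Rabs (a (- Z.of_nat (S j))%Z)) N); tauto. }
  assert (Hh2 : forall j k, h j <> 0 -> h k <> 0 -> (j <= k + C3)%nat).
  { intros j k Hj Hk. apply Hhb in Hj. apply Hhb in Hk.
    assert (X := HC3 (Z.of_nat (S k)) (Z.of_nat (S j))).
    cut (Z.abs (Z.of_nat (S j) - Z.of_nat (S k)) <= Z.of_nat C3)%Z; [lia|].
    apply X. apply Rabs_le. unfold Bp in *. lra. }
  assert (T1 := tail1 u exU K). fold U in T1.
  assert (T0 : 0 <= Series U - fs U K) by (assert (X := Rabs_pos (Series u - fs u K)); lra).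
  assert (M1 : fs U J0 <= fs U K) by (apply fs_mono; auto; intros; apply Rabs_pos).
  assert (FE := fs_tail e U J0 He0 HeU K). replace (Nat.min K J0) with J0 in FE by lia.
  assert (FH := fs_count h (/ N) C3 Hh1 Hh2 K).
  assert (FH' : / N * INR (S (2 * C3)) < eps / 3).
  { assert (0 <= INR (S (2 * C3))) by apply pos_INR.
    apply Rmult_lt_reg_l with N; auto. rewrite <- Rmult_assoc, Rinv_r by lra.
    apply Rmult_lt_reg_l with (3 / eps). apply Rdiv_lt_0_compat; lra.
    replace (3 / eps * (N * (eps / 3))) with N by (field; lra).
    replace (3 / eps * (1 * INR (S (2 * C3)))) with (3 * INR (S (2 * C3)) / eps) by (field; lra).
    lra. }
  assert (D1 : Rabs (fs v K - fs u K) <= fs e K + fs h K).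
  { rewrite fs_minus, fs_plus. eapply Rle_trans; [apply fs_abs|]. apply fs_le. auto. }
  rewrite Hs, W, F0.
  replace (/ a 0%Z + fs v K - (/ a 0%Z + Series u)) with ((fs v K - fs u K) - (Series u - fs u K)) by ring.
  eapply Rle_lt_trans; [apply Rabs_triang|]. rewrite Rabs_Ropp. lra.
Qed.


Lemma Cinv0 (r : R) : r <> 0 -> Cinv (Cminus (RtoC 0) (RtoC r)) = RtoC (- / r).
Proof.
  intros H. rewrite <- RtoC_minus, <- RtoC_inv by lra. f_equal. field. auto.
Qed.

Theorem corollary1 (a : Z -> R)
  (hAP : almost_periodic_set a)
  (h0 : forall n : Z, a n <> 0)
  (hmono : forall n : Z, a n <= a (n + 1)%Z) :
  (exists alpha0 : R,
     forall eps : R, 0 < eps ->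
       exists N0 : R, forall N s : R, N0 <= N -> recip_sum_is a N s ->
         Rabs (s - alpha0) < eps)
  /\
  (forall z : C, (forall n : Z, z <> RtoC (a n)) ->
     ex_series (fun k : nat => Cmod (pair_term a z (Z.of_nat (S k))))).
Proof.
  assert (HLF : locally_finite a) by apply hAP.
  destruct (get_AP1 a hAP) as [L [HL HA]].
  assert (hg := gap a hmono L HA).
  assert (Hgap := absgap a hmono (L + 2) hg).
  destruct (BDs a hmono L HLF HA (L + 1)) as [C1 HC1].
  destruct (BD a hmono L HLF HA 2) as [C2 HC2].
  destruct (BD a hmono L HLF HA 1) as [C0 HC].
  assert (Hsym := sym a hmono L HL HA C1 C2 HC1 HC2).
  set (B := (L + 2) * IZR (Z.of_nat C1 + 2 * Z.of_nat C2) + 1 + L) in Hsym.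
  destruct (BDs a hmono L HLF HA (2 * (B + 2 * Rabs (a 0%Z)))) as [C3 HC3].
  assert (Hgr := growth a hmono C0 HC).
  assert (Hc : 0 < / INR (S C0)) by (apply Rinv_0_lt_compat, lt_0_INR; lia).
  assert (P2 : forall z : C, ex_series (fun k : nat => Cmod (pair_term a z (Z.of_nat (S k))))).
  { intros z. apply (part2 a (/ INR (S C0)) B Hc); auto. }
  split; [|intros z _; apply P2].
  apply (part1 a hmono (L + 2) ltac:(lra) Hgap B Hsym C3 HC3).
  apply (ex_series_ext (fun k => Cmod (pair_term a (RtoC 0) (Z.of_nat (S k))))); [|apply P2].
  intros k. unfold pair_term. rewrite !Cinv0 by auto. rewrite <- RtoC_plus, Cmod_R.
  rewrite <- Rabs_Ropp. f_equal. ring.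
Qed.
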